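(* There is a unique morphism of cosimplicial objects in $\mathsf{Cat}_\Delta$ \[ \varphi=(\varphi_n)_{n\ge 0}\colon \widetilde{\mathfrak C}[\Delta^\bullet]\to \Delta^\bullet_{\overline W} \] such that for every $n\ge 0$ the simplicial functor $\varphi_n\colon \widetilde{\mathfrak C}[\Delta^n]\to\Delta^n_{\overline W}$ is the identity on objects.
   Context: $\mathsf{Cat}_\Delta$ denotes the category of small simplicially enriched categories (''simplicial categories''); for a simplicial category $\mathcal C$ and objects $x,y$, $\mathcal C(x,y)$ is the simplicial set of maps and its $n$-simplices are called $n$-arrows. The cosimplicial simplicial category $\widetilde{\mathfrak C}[\Delta^\bullet]$: $\widetilde{\mathfrak C}[\Delta^n]$ has objects $0,\dots,n$; for $i\le j$, $\widetilde{\mathfrak C}[\Delta^n](i,j)=N(P_{i,j}^{\mathrm{op}})$, where $P_{i,j}$ is the poset of subsets $I\subseteq[n]$ with $\min I=i$, $\max I=j$, ordered by inclusion (so $P_{i,j}^{\mathrm{op}}$ is ordered by reverse inclusion), and the mapping simplicial set is empty if $i>j$; composition is induced by union of subsets. A poset map $\alpha\colon[p]\to[q]$ acts by $I\mapsto\alpha(I)$. The cosimplicial simplicial category $\Delta^\bullet_{\overline W}$: $\Delta^n_{\overline W}$ is the simplicial category freely generated by an $(n-i)$-arrow $g_{n,i}\colon i-1\to i$ for each $1\le i\le n$. Explicitly, its objects are $0,\dots,n$, and $\Delta^n_{\overline W}(i,j)=\prod_{n-j\le s<n-i}\Delta^s=\Delta^{n-j}\times\cdots\times\Delta^{n-i-1}$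 if $i\le j$ (the empty product being $\Delta^0$) and $\emptyset$ if $i>j$; composition $\Delta^n_{\overline W}(j,k)\times\Delta^n_{\overline W}(i,j)\to\Delta^n_{\overline W}(i,k)$ is the identity map of $\prod_{n-k\le s<n-i}\Delta^s$; $g_{n,i}$ is the top nondegenerate simplex of $\Delta^n_{\overline W}(i-1,i)=\Delta^{n-i}$. Coface maps $\partial_i\colon\Delta^{n-1}_{\overline W}\to\Delta^n_{\overline W}$ ($n\ge1$, $0\le i\le n$) are determined on generators by $\partial_i(g_{n-1,j})=d_{i-j}g_{n,j}$ if $j<i$ or $i=n$; $=g_{n,i-1}\circ d_0 g_{n,i}$ if $j=i<n$; $=g_{n,j+1}$ if $j>i$. Codegeneracy maps $\sigma_i\colon\Delta^{n+1}_{\overline W}\to\Delta^n_{\overline W}$ ($0\le i\le n$) are given by $\sigma_i(g_{n+1,j})=s_{i-j}g_{n,j}$ if $j\le i$; $=\mathrm{id}_i$ if $j=i+1$; $=g_{n,j-1}$ if $j>i+1$. Here $d_k,s_k$ are the simplicial face and degeneracy operators on arrows. *)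

(* Defs.v *)
From mathcomp Require Import all_boot.
Set Implicit Arguments. Unset Strict Implicit. Unset Printing Implicit Defensive.

(* Simplices of nerves.  An m-simplex of the nerve of a poset (V, <=) is a  *)
(* monotone map [m] -> V, here a function 'I_m.+1 -> V.  Simplicial         *)
(* operators act by precomposition with monotone maps [p] -> [m].           *)

(* Objects of both simplicial categories in degree n are 0..n = 'I_n.+1.   *)

Definition Pij (n : nat) (i j : 'I_n.+1) (I : {set 'I_n.+1}) : Prop :=
  i \in I /\ j \in I /\ (forall k, k \in I -> (i <= k <= j)%N).

(* m-simplices of  C~[Delta^n](i,j) = N(P_{i,j}^op):
   I_0 >= I_1 >= ... >= I_m in P^op, i.e. I_0 \supset I_1 \supset ... *)
Definition Csimplex (n : nat) (i j : 'I_n.+1) (m : nat)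
    (x : 'I_m.+1 -> {set 'I_n.+1}) : Prop :=
  (forall k, Pij i j (x k)) /\
  (forall k l : 'I_m.+1, (k <= l)%N -> x l \subset x k).

Definition Ccomp (n m : nat) (x y : 'I_m.+1 -> {set 'I_n.+1}) :
  'I_m.+1 -> {set 'I_n.+1} := fun t => x t :|: y t.

Definition codeg (n : nat) (c : 'I_n.+1) (v : 'I_n.+2) : 'I_n.+1 :=
  inord (if (v <= c)%N then nat_of_ord v else v.-1).

(* Delta^n_{W}(i,j) = prod_{i < g <= j} Delta^{n-g}  (the factor for the
   generator g_{n,g} : g-1 -> g is Delta^{n-g}, i.e. s = n - g ranges over
   n-j <= s < n-i).  A vertex is a function t : nat -> nat, t g being the
   coordinate for the generator g; coordinates outside (i,j] are 0. *)
Definition Wvert (n i j : nat) (t : nat -> nat) : Prop :=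
  (i <= j <= n)%N /\
  (forall g, ((i < g <= j)%N -> (t g <= n - g)%N) /\
             (~~ (i < g <= j)%N -> t g = 0%N)).

(* m-simplices of the product of nerves = monotone maps to the product poset *)
Definition Wsimplex (n i j m : nat) (y : 'I_m.+1 -> nat -> nat) : Prop :=
  (forall k, Wvert n i j (y k)) /\
  (forall k l : 'I_m.+1, (k <= l)%N -> forall g, (y k g <= y l g)%N).

(* Composition Delta_W(j,k) x Delta_W(i,j) -> Delta_W(i,k): concatenation of
   coordinates (it is the identity of prod_{n-k <= s < n-i} Delta^s). *)
Definition Wcomp (m j : nat) (a b : 'I_m.+1 -> nat -> nat) :
  'I_m.+1 -> nat -> nat := fun t g => if (j < g)%N then a t g else b t g.

(* Coface partial_c : Delta^n_W -> Delta^{n+1}_W (0 <= c <= n+1) on the mapping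
   space Delta^n_W(i,j), vertexwise (the induced map of products of nerves).
   On generators: g_{n,g} |-> d_{c-g} g_{n+1,g} (g < c),
                  g_{n,c} |-> g_{n+1,c+1} o d_0 g_{n+1,c} (c <= n),
                  g_{n,g} |-> g_{n+1,g+1} (g > c).
   d_k of the top simplex of Delta^{n+1-g} is the coface [n-g] -> [n+1-g]
   skipping k; d_0 is v |-> v+1. *)
Definition Wcoface (c i j : nat) (t : nat -> nat) : nat -> nat := fun g =>
  if (g < c)%N then (if (t g < c - g)%N then t g else (t g).+1)
  else if g == c then (if (i < c <= j)%N then (t c).+1 else 0%N)
  else t g.-1.

(* Codegeneracy sigma_c : Delta^{n+1}_W -> Delta^n_W (0 <= c <= n):
   g_{n+1,g} |-> s_{c-g} g_{n,g} (g <= c), id (g = c+1), g_{n,g-1} (g > c+1).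
   s_k of the top simplex of Delta^{n-g} is the codegeneracy
   [n+1-g] -> [n-g] hitting k twice. *)
Definition Wcodeg (c : nat) (t : nat -> nat) : nat -> nat := fun g =>
  if (g <= c)%N then (if (t g <= c - g)%N then t g else (t g).-1)
  else t g.+1.

(* The data of a family (phi_n) of simplicial functors
   C~[Delta^n] -> Delta^n_W that are the identity on objects: for each n and
   objects i, j, a map of m-simplices of the mapping spaces. *)
Definition PhiData :=
  forall (n : nat) (i j : 'I_n.+1) (m : nat),
    ('I_m.+1 -> {set 'I_n.+1}) -> ('I_m.+1 -> nat -> nat).

Definition is_simplicial_map (phi : PhiData) : Prop :=
  forall n (i j : 'I_n.+1) m x, Csimplex i j x ->
    Wsimplex n i j (phi n i j m x) /\
    (forall p (alpha : 'I_p.+1 -> 'I_m.+1),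
        {homo alpha : a b / (a <= b)%N} ->
        forall t g, phi n i j p (x \o alpha) t g = phi n i j m x (alpha t) g).

Definition is_functor (phi : PhiData) : Prop :=
  (forall n (i : 'I_n.+1) g, phi n i i 0 (fun _ => [set i]) ord0 g = 0%N) /\
  (forall n (i j k : 'I_n.+1) m x y,
     Csimplex j k x -> Csimplex i j y ->
     forall t g, phi n i k m (Ccomp x y) t g = Wcomp j (phi n j k m x) (phi n i j m y) t g).

Definition is_cosimplicial (phi : PhiData) : Prop :=
  (forall n (c : 'I_n.+2) (i j : 'I_n.+1) m x, Csimplex i j x ->
     forall t g,
       phi n.+1 (lift c i) (lift c j) m (fun s => lift c @: x s) t g
       = Wcoface c i j (phi n i j m x t) g) /\
  (forall n (c : 'I_n.+1) (i j : 'I_n.+2) m x, Csimplex i j x ->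
     forall t g,
       phi n (codeg c i) (codeg c j) m (fun s => codeg c @: x s) t g
       = Wcodeg c (phi n.+1 i j m x t) g).

Definition is_cosimplicial_morphism (phi : PhiData) : Prop :=
  [/\ is_simplicial_map phi, is_functor phi & is_cosimplicial phi].

(* Main.v *)
Require Import Defs.
From mathcomp Require Import all_boot zify.
Set Implicit Arguments. Unset Strict Implicit. Unset Printing Implicit Defensive.

Definition Pin n (X : {set 'I_n.+1}) (k : nat) : bool :=
  [exists v in X, nat_of_ord v == k].

Fixpoint dist (P : nat -> bool) (g fuel : nat) : nat :=
  match fuel with
  | 0 => 0
  | f.+1 => if P g then 0 else (dist P g.+1 f).+1
  end.

Lemma distE (P : nat -> bool) d : forall g fuel, P (g + d) -> (forall e, e < d -> ~~ P (g + e)) ->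
  d < fuel -> dist P g fuel = d.
Proof.
elim: d => [|d IH] g [|f] //=.
- by rewrite addn0 => ->.
- move=> Pd He ltd; have := He 0 isT; rewrite addn0 => /negbTE ->.
  rewrite (IH g.+1 f) //; first by rewrite addSnnS.
  by move=> e lte; rewrite addSnnS; apply: He.
Qed.

Lemma Pin_bound n (X : {set 'I_n.+1}) k : Pin X k -> k <= n.
Proof. by case/existsP => v /andP[_ /eqP <-]; rewrite -ltnS. Qed.

Lemma PinP n (X : {set 'I_n.+1}) (v : 'I_n.+1) : v \in X -> Pin X v.
Proof. by move=> vX; apply/existsP; exists v; rewrite vX eqxx. Qed.

Lemma phi0_char n (X : {set 'I_n.+1}) g b : Pin X b -> g <= b ->
  (forall k, Pin X k -> g <= k -> b <= k) -> dist (Pin X) g n.+1 = b - g.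
Proof.
move=> Pb gb mn; apply: distE; first by rewrite subnKC.
- move=> e lte; apply/negP => Pe; have := mn _ Pe (leq_addr e g); lia.
- have := Pin_bound Pb; lia.
Qed.

Lemma exmin n (X : {set 'I_n.+1}) g j : Pin X j -> g <= j ->
  exists b, [/\ Pin X b, g <= b & forall k, Pin X k -> g <= k -> b <= k].
Proof.
move=> Pj gj; have ex : exists k, Pin X k && (g <= k) by exists j; rewrite Pj.
case: (ex_minnP ex) => b /andP[Pb gb] mn; exists b; split=> // k Pk gk.
by apply: mn; rewrite Pk.
Qed.

Lemma phi0_img n n2 (X : {set 'I_n.+1}) (f : 'I_n.+1 -> 'I_n2.+1) (F : nat -> nat) g g2 b :
  (forall v : 'I_n.+1, nat_of_ord (f v) = F v) -> {homo F : a c / a <= c} ->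
  (forall v, (g <= F v) = (g2 <= v)) ->
  Pin X b -> g2 <= b -> (forall k, Pin X k -> g2 <= k -> b <= k) ->
  dist (Pin (f @: X)) g n2.+1 = F b - g.
Proof.
move=> fF Fm ord Pb gb mn.
case/existsP: (Pb) => v0 /andP[v0X /eqP v0b].
apply: phi0_char.
- by apply/existsP; exists (f v0); rewrite imset_f // fF v0b eqxx.
- by rewrite -v0b ord v0b.
- move=> k /existsP[w /andP[/imsetP[v vX ->] /eqP <-]].
  rewrite fF ord => gv; rewrite -v0b; apply: Fm; rewrite v0b.
  by apply: mn => //; apply: PinP.
Qed.

Definition phi0 : PhiData := fun n i j m x t g =>
  if (i < g <= j) then dist (Pin (x t)) g n.+1 else 0.

Lemma Pij_ij n (i j : 'I_n.+1) X : Pij i j X -> Pin X i /\ Pin X j /\ i <= j.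
Proof.
case=> iX [jX H]; split; first exact: PinP.
split; first exact: PinP.
by case/andP: (H _ iX).
Qed.

Lemma Pin_ij n (i j : 'I_n.+1) X k : Pij i j X -> Pin X k -> i <= k <= j.
Proof. by case=> _ [_ H] /existsP[v /andP[vX /eqP <-]]; apply: H. Qed.

Lemma phi0_val n (i j : 'I_n.+1) X g : Pij i j X -> i < g <= j ->
  exists b, [/\ Pin X b, g <= b, (forall k, Pin X k -> g <= k -> b <= k)
             & dist (Pin X) g n.+1 = b - g].
Proof.
move=> HP /andP[ig gj]; have [Pi [Pj ij]] := Pij_ij HP.
have [b [Pb gb mn]] := exmin Pj gj.
by exists b; split => //; apply: phi0_char.
Qed.

Lemma phi0_simpl : is_simplicial_map phi0.
Proof.
move=> n i j m x [HP Hm]; split; last by [].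
split.
- move=> k; have [Pi [Pj ij]] := Pij_ij (HP k).
  split; first by rewrite ij -ltnS ltn_ord.
  move=> g; split.
  + move=> R; rewrite /phi0 R.
    have [b [Pb gb _ ->]] := phi0_val (HP k) R.
    have := Pin_bound Pb; lia.
  + by move=> /negbTE R; rewrite /phi0 R.
- move=> k l kl g; rewrite /phi0; case: ifP => // R.
  have [b [Pb gb mn ->]] := phi0_val (HP k) R.
  have [b' [Pb' gb' mn' ->]] := phi0_val (HP l) R.
  have : b <= b'.
    apply: mn => //; case/existsP: Pb' => v /andP[vX vb]; apply/existsP; exists v.
    by rewrite vb (subsetP (Hm _ _ kl)).
  lia.
Qed.

Lemma phi0_functor : is_functor phi0.
Proof.
split.
- move=> n i g; rewrite /phi0; case: ifP => //; lia.
- move=> n i j k m x y [Hx _] [Hy _] t g.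
  have [Pj [Pk jk]] := Pij_ij (Hx t).
  have [Pi [Pj' ij]] := Pij_ij (Hy t).
  have PU : forall k', Pin (Ccomp x y t) k' = Pin (x t) k' || Pin (y t) k'.
    move=> k'; apply/existsP/orP.
    + case=> v /andP[]; rewrite /Ccomp in_setU => /orP[] vX vk.
      * by left; apply/existsP; exists v; rewrite vX.
      * by right; apply/existsP; exists v; rewrite vX.
    + case=> /existsP[v /andP[vX vk]]; exists v; rewrite /Ccomp in_setU vX ?orbT //.
  rewrite /phi0 /Wcomp.
  have [jg|jg] : j < g \/ g <= j by lia.
  + have [gk|gk] : g <= k \/ k < g by lia.
    2:{ have N1 : (i < g <= k) = false by lia.
        have N2 : (j < g <= k) = false by lia.
        have N3 : (j < g) = true by lia.
        by rewrite N1 N2 N3. }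
    have R1 : (i < g <= k) = true by lia.
    have R : j < g <= k by lia.
    have N3 : (j < g) = true by lia.
    rewrite R1 R N3.
    have [b [Pb gb mn ->]] := phi0_val (Hx t) R.
    apply: phi0_char.
    * by rewrite PU Pb.
    * done.
    * move=> k' /[dup] Pk'; rewrite PU => /orP[] P gk'; first exact: mn.
      have := Pin_ij (Hy t) P; lia.
  + have N3 : (j < g) = false by lia.
    have [ig|ig] : i < g \/ g <= i by lia.
    2:{ have N1 : (i < g <= k) = false by lia.
        have N2 : (i < g <= j) = false by lia.
        by rewrite N1 N2 N3. }
    have R1 : (i < g <= k) = true by lia.
    have R : i < g <= j by lia.
    rewrite R1 R N3.
    have [b [Pb gb mn ->]] := phi0_val (Hy t) R.
    have bj : b <= j by apply: mn.
    apply: phi0_char.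
    * by rewrite PU Pb orbT.
    * done.
    * move=> k' /[dup] Pk'; rewrite PU => /orP[] P gk'; last exact: mn.
      have := Pin_ij (Hx t) P; lia.
Qed.

Lemma codeg_val n (c : 'I_n.+1) (v : 'I_n.+2) : nat_of_ord (codeg c v) = unbump c v.
Proof.
rewrite /codeg inordK; first by rewrite /unbump; case: ifP; lia.
have := ltn_ord v; have := ltn_ord c; case: ifP; lia.
Qed.

Lemma leq_unbump c g v : (g <= unbump c v) = (bump c.+1 g <= v).
Proof. rewrite /unbump /bump; apply/idP/idP; case: (ltnP c v); case: (leqP c.+1 g); lia. Qed.

Lemma phi0_cosimpl : is_cosimplicial phi0.
Proof.
split.
- move=> n c i j m x [Px _] t g.
  rewrite /phi0.
  have Er : (lift c i < g <= lift c j) = (i < unbump c g <= j).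
    by rewrite /= ltnNge leq_bump -ltnNge leq_bump.
  rewrite Er /Wcoface; case: ifP => R.
  + have [Pi [Pj ij]] := Pij_ij (Px t).
    have [b [Pb gb mn]] := exmin Pj (proj2 (andP R)).
    rewrite (@phi0_img _ _ _ _ (bump c) _ (unbump c g) b) //; last first.
    * by move=> v; rewrite leq_bump.
    * by move=> a d; rewrite leq_bump2.
    have Ev := phi0_char Pb gb mn.
    case: (ltngtP g c) => gc.
    * have Eu : unbump c g = g by rewrite /unbump; lia.
      rewrite Eu in R Ev gb; rewrite R Ev /bump; case: ifP; lia.
    * have Eu : unbump c g = g.-1 by rewrite /unbump; lia.
      rewrite Eu in R Ev gb; rewrite R Ev /bump; lia.
    * subst g; have Eu : unbump c c = c by rewrite /unbump; lia.
      rewrite Eu in R Ev gb; rewrite R Ev /bump; lia.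
  + case: (ltngtP g c) => gc.
    * have Eu : unbump c g = g by rewrite /unbump; lia.
      by rewrite Eu in R; rewrite R //; case: ifP; lia.
    * have Eu : unbump c g = g.-1 by rewrite /unbump; lia.
      by rewrite Eu in R; rewrite R //; case: ifP; lia.
    * subst g; have Eu : unbump c c = c by rewrite /unbump; lia.
      by rewrite Eu in R; rewrite R //; case: ifP; lia.
- move=> n c i j m x [Px _] t g.
  rewrite /phi0 !codeg_val.
  have Er : (unbump c i < g <= unbump c j) = (i < bump c.+1 g <= j).
    by rewrite ltnNge leq_unbump -ltnNge leq_unbump.
  rewrite Er /Wcodeg; case: ifP => R.
  + have [Pi [Pj ij]] := Pij_ij (Px t).
    have [b [Pb gb mn]] := exmin Pj (proj2 (andP R)).
    rewrite (@phi0_img _ _ _ _ (unbump c) _ (bump c.+1 g) b) //; last first.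
    * by move=> v; rewrite leq_unbump.
    * by move=> a d ad; rewrite /unbump; case: (ltnP c a); case: (ltnP c d); lia.
    * by move=> v; rewrite codeg_val.
    have Ev := phi0_char Pb gb mn.
    case: (leqP g c) => gc.
    * have Eu : bump c.+1 g = g by rewrite /bump; lia.
      rewrite Eu in R Ev gb; rewrite R Ev /unbump; try case: ifP; lia.
    * have Eu : bump c.+1 g = g.+1 by rewrite /bump; lia.
      rewrite Eu in R Ev gb; rewrite R Ev /unbump; try case: ifP; lia.
  + case: (leqP g c) => gc.
    * have Eu : bump c.+1 g = g by rewrite /bump; lia.
      by rewrite Eu in R; rewrite R //; case: ifP; lia.
    * have Eu : bump c.+1 g = g.+1 by rewrite /bump; lia.
      by rewrite Eu in R; rewrite R //; case: ifP; lia.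
Qed.

Lemma phi0_morph : is_cosimplicial_morphism phi0.
Proof. split; [exact: phi0_simpl | exact: phi0_functor | exact: phi0_cosimpl]. Qed.

Lemma Cvert n (i j : 'I_n.+1) I : Pij i j I -> Csimplex i j (fun _ : 'I_1 => I).
Proof. by move=> HP; split => // k l _; exact: subxx. Qed.

Lemma vertex_red (phi : PhiData) : is_simplicial_map phi ->
  forall n (i j : 'I_n.+1) m x, Csimplex i j x -> forall t g,
  phi n i j m x t g = phi n i j 0 (fun _ => x t) ord0 g.
Proof.
move=> Hs n i j m x Cx t g.
by have := (proj2 (Hs n i j m x Cx)) 0 (fun _ => t) (fun _ _ _ => leqnn _) ord0 g.
Qed.

Lemma Wv (phi : PhiData) : is_simplicial_map phi ->
  forall n (i j : 'I_n.+1) I, Pij i j I ->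
  Wvert n i j (phi n i j 0 (fun _ => I) ord0).
Proof. by move=> Hs n i j I HP; have [[H _] _] := Hs n i j 0 _ (Cvert HP); apply: H. Qed.

Lemma zero_out (phi : PhiData) : is_simplicial_map phi ->
  forall n (i j : 'I_n.+1) I g, Pij i j I -> ~~ (i < g <= j) ->
  phi n i j 0 (fun _ => I) ord0 g = 0.
Proof. by move=> Hs n i j I g HP R; have [_ H] := Wv Hs HP; apply: (proj2 (H g)). Qed.

Lemma zero_high (phi : PhiData) : is_simplicial_map phi ->
  forall n (i j : 'I_n.+1) I g, Pij i j I -> n <= g ->
  phi n i j 0 (fun _ => I) ord0 g = 0.
Proof.
move=> Hs n i j I g HP ng; have [_ H] := Wv Hs HP.
case: (boolP (i < g <= j)) => R; last by apply: (proj2 (H g)).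
have := (proj1 (H g)) R; lia.
Qed.

Unset Implicit Arguments.
Section Uniq.
Variables phi psi : PhiData.
Hypothesis Hphi : is_cosimplicial_morphism phi.
Hypothesis Hpsi : is_cosimplicial_morphism psi.

Definition Qn n := forall (i j : 'I_n.+1) I, Pij i j I -> forall g,
  phi n i j 0 (fun _ => I) ord0 g = psi n i j 0 (fun _ => I) ord0 g.

Lemma descent n : Qn n -> forall (i j : 'I_n.+2) (I : {set 'I_n.+2}) (c : 'I_n.+2),
  c \notin I -> Pij i j I -> forall g,
  phi n.+1 i j 0 (fun _ => I) ord0 g = psi n.+1 i j 0 (fun _ => I) ord0 g.
Proof.
move=> IH i j I c cI HP g.
have [iI [jI HI]] := HP.
case: (unliftP c i) => [i' Ei|Ei]; last by subst; rewrite iI in cI.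
case: (unliftP c j) => [j' Ej|Ej]; last by subst; rewrite jI in cI.
pose I' := [set v | lift c v \in I].
have EI : I = lift c @: I'.
  apply/setP => u; apply/idP/imsetP.
  - case: (unliftP c u) => [u' ->|->]; last by move=> cI'; rewrite cI' in cI.
    by move=> uI; exists u' => //; rewrite inE.
  - by case=> v; rewrite inE => vI ->.
have HP' : Pij i' j' I'.
  split; first by rewrite inE -Ei.
  split; first by rewrite inE -Ej.
  move=> k; rewrite inE => /HI; rewrite Ei Ej /= !leq_bump2; done.
subst i j; rewrite EI.
case: Hphi => _ _ [Cf _]; case: Hpsi => _ _ [Cg _].
have E1 : phi n.+1 (lift c i') (lift c j') 0 (fun _ => lift c @: I') ord0 g
  = Wcoface c i' j' (phi n i' j' 0 (fun _ => I') ord0) g := Cf n c i' j' 0 _ (Cvert HP') ord0 g.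
have E2 : psi n.+1 (lift c i') (lift c j') 0 (fun _ => lift c @: I') ord0 g
  = Wcoface c i' j' (psi n i' j' 0 (fun _ => I') ord0) g := Cg n c i' j' 0 _ (Cvert HP') ord0 g.
by rewrite E1 E2 /Wcoface !(IH _ _ _ HP').
Qed.

Lemma allQ n : Qn n.
Proof.
have Sf : is_simplicial_map phi by case: Hphi.
have Sg : is_simplicial_map psi by case: Hpsi.
elim: n => [|n IH] i j I HP g.
  have i0 : nat_of_ord i = 0 by have := ltn_ord i; lia.
  have j0 : nat_of_ord j = 0 by have := ltn_ord j; lia.
  have R : ~~ (i < g <= j) by rewrite i0 j0; lia.
  by rewrite (zero_out Sf HP R) (zero_out Sg HP R).
case: (pickP (fun c => c \notin I)) => [c cI | all].
  exact: (descent n IH _ _ _ c cI HP g).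
have inI : forall v, v \in I by move=> v; have := all v; rewrite /= => /negbFE.
have [_ [_ HI]] := HP.
have i0 : nat_of_ord i = 0 by have := HI ord0 (inI _); rewrite /=; lia.
have jn : nat_of_ord j = n.+1.
  by have := HI ord_max (inI _); have := ltn_ord j; rewrite /=; lia.
pose jj : 'I_n.+2 := inord n.
have jjn : nat_of_ord jj = n by rewrite inordK.
pose A := [set jj; j].
pose B := [set v : 'I_n.+2 | v <= n].
have EI : I = A :|: B.
  apply/setP => v; rewrite !inE (inI v); apply/esym.
  case: (leqP v n) => vn; rewrite ?orbT //.
  have -> : v = j by apply: val_inj; have := ltn_ord v; rewrite /=; lia.
  by rewrite eqxx orbT.
have PA : Pij jj j A.
  split; first by rewrite !inE eqxx.
  split; first by rewrite !inE eqxx orbT.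
  by move=> k; rewrite !inE => /orP[] /eqP ->; lia.
have PB : Pij i jj B.
  split; first by rewrite inE; lia.
  split; first by rewrite inE; lia.
  by move=> k; rewrite inE; lia.
case: Hphi => _ [_ Ff] _; case: Hpsi => _ [_ Fg] _.
rewrite EI.
have E1 : phi n.+1 i j 0 (fun _ => A :|: B) ord0 g
  = Wcomp jj (phi n.+1 jj j 0 (fun _ => A)) (phi n.+1 i jj 0 (fun _ => B)) ord0 g
  := Ff n.+1 i jj j 0 _ _ (Cvert PA) (Cvert PB) ord0 g.
have E2 : psi n.+1 i j 0 (fun _ => A :|: B) ord0 g
  = Wcomp jj (psi n.+1 jj j 0 (fun _ => A)) (psi n.+1 i jj 0 (fun _ => B)) ord0 g
  := Fg n.+1 i jj j 0 _ _ (Cvert PA) (Cvert PB) ord0 g.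
rewrite E1 E2 /Wcomp; case: ifP => jg.
  have ng : n.+1 <= g by lia.
  by rewrite (zero_high Sf PA ng) (zero_high Sg PA ng).
apply: (descent n IH _ _ _ ord_max _ PB g).
by rewrite inE /= ltnn.
Qed.

End Uniq.
Set Implicit Arguments.

Theorem proposition3p3 :
  (exists phi : PhiData, is_cosimplicial_morphism phi) /\
  (forall phi psi : PhiData,
     is_cosimplicial_morphism phi -> is_cosimplicial_morphism psi ->
     forall n (i j : 'I_n.+1) m (x : 'I_m.+1 -> {set 'I_n.+1}),
       Csimplex i j x ->
       forall t g, phi n i j m x t g = psi n i j m x t g).
Proof.
split; first by exists phi0; exact: phi0_morph.
move=> phi psi Hphi Hpsi n i j m x Cx t g.
have Sf : is_simplicial_map phi by case: Hphi.
have Sg : is_simplicial_map psi by case: Hpsi.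
rewrite (vertex_red Sf Cx) (vertex_red Sg Cx).
exact: (allQ phi psi Hphi Hpsi n i j (x t) (proj1 Cx t) g).
Qed.
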